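(* Let $n,c\geq 1$. A $\mathrm{MS}^0_{\mathbb Z_{2nc+1}^*}(2,n;n,2;c)$ (that is, a set of $c$ arrays of size $2\times n$ with no empty cells) exists if and only if $n\geq 3$.
   Context: For an abelian group $\Gamma$ and $\Omega\subseteq\Gamma$, a zero-sum magic partially filled array set $\mathrm{MS}^0_\Omega(m,n;s,k;c)$ is a set of $c$ partially filled $m\times n$ arrays (arrays where some cells may be empty) with entries in $\Omega$ such that every element of $\Omega$ appears exactly once in exactly one of the arrays, every array has exactly $s$ filled cells in each row and exactly $k$ in each column, and in every array each row and each column sums to $0_\Gamma$. $\mathbb Z_N$ is the cyclic group of order $N$ and $\mathbb Z_N^*=\mathbb Z_N\setminus\{0\}$. *)

(* Defs.v *)
From mathcomp Require Import all_boot all_order all_algebra.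
Set Implicit Arguments. Unset Strict Implicit. Unset Printing Implicit Defensive.
Import GRing.Theory.
Local Open Scope ring_scope.

(* A partially filled m x n array with entries in G: empty cell = None. *)
Definition pfarray (G : Type) (m n : nat) := 'I_m -> 'I_n -> option G.

Definition is_MS0 (G : finZmodType) (Omega : {set G}) (m n s k c : nat)
    (A : 'I_c -> pfarray G m n) : Prop :=
  (forall a i j x, A a i j = Some x -> x \in Omega) /\
      (forall x, x \in Omega ->
         #|[set t : 'I_c * 'I_m * 'I_n | A t.1.1 t.1.2 t.2 == Some x]| = 1%N) /\
      (forall a i, #|[set j : 'I_n | A a i j != None]| = s) /\
      (forall a j, #|[set i : 'I_m | A a i j != None]| = k) /\
      (forall a i, \sum_(j < n) odflt 0 (A a i j) = 0) /\
      (forall a j, \sum_(i < m) odflt 0 (A a i j) = 0).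

Definition MS0_exists (G : finZmodType) (Omega : {set G}) (m n s k c : nat) : Prop :=
  exists A : 'I_c -> pfarray G m n, is_MS0 Omega s k A.

(* Main.v *)
Require Import Defs.
From mathcomp Require Import all_boot all_order all_algebra zify.

Module F1.
Import GRing.Theory Num.Theory.
Local Open Scope ring_scope.

Lemma framework (n c : nat) (n0 : (0 < n)%N) (c0 : (0 < c)%N) (e : 'I_c -> 'I_n -> 'Z_(2*n*c+1)) :
  (forall a j, e a j != 0) ->
  (forall a j a' j', e a j = e a' j' -> a = a' /\ j = j') ->
  (forall a j a' j', e a j != - e a' j') ->
  (forall a, \sum_(j < n) e a j = 0) ->
  MS0_exists [set x : 'Z_(2*n*c+1) | x != 0] 2 n n 2 c.
Proof.
move=> enz einj eopp esum.
set N := (2*n*c+1)%N.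
pose f (t : 'I_c * 'I_2 * 'I_n) := if (t.1.2 == 0 :> nat) then e t.1.1 t.2 else - e t.1.1 t.2.
exists (fun a i j => Some (f (a, i, j))).
have fnz : forall t, f t != 0.
  by move=> [[a i] j]; rewrite /f; case: ifP => _; rewrite ?oppr_eq0 enz.
have finj : injective f.
  move=> [[a i] j] [[a' i'] j']; rewrite /f /=.
  case: i => [[|[|//]] Hi]; case: i' => [[|[|//]] Hi'] /=.
  - by move/einj => [-> ->]; congr (_, _, _); apply: val_inj.
  - by move=> H; move: (eopp a j a' j'); rewrite H eqxx.
  - by move=> H; move: (eopp a' j' a j); rewrite -H eqxx.
  - by move/oppr_inj/einj => [-> ->]; congr (_, _, _); apply: val_inj.
have N1 : (1 < N)%N by rewrite /N addn1 ltnS !muln_gt0 n0 c0.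
have fim : f @: setT = [set x : 'Z_N | x != 0].
  apply/eqP; rewrite eqEcard; apply/andP; split.
    by apply/subsetP => y /imsetP [t _ ->]; rewrite inE fnz.
  rewrite card_imset // cardsT card_prod card_prod !card_ord.
  have -> : [set x : 'Z_N | x != 0] = ~: [set 0].
    by apply/setP => x; rewrite !inE.
  rewrite cardsC1 card_ord Zp_cast //= /N.
  by rewrite addn1 /= mulnC mulnA [(c * 2)%N]mulnC.
split; [|split; [|split; [|split; [|split]]]].
- by move=> a i j x [<-]; rewrite inE fnz.
- move=> x Hx; rewrite -fim in Hx; case/imsetP: Hx => t0 _ ->.
  suff -> : [set t | Some (f (t.1.1, t.1.2, t.2)) == Some (f t0)] = [set t0] by rewrite cards1.
  apply/setP => t; rewrite !inE.
  apply/eqP/eqP => [[/finj]|->] //; case: t => [[]] //.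
- move=> a i; rewrite -[RHS]card_ord -cardsT; congr (#|_|);
  by try (apply/setP => j; rewrite !inE).
- move=> a j; rewrite -[RHS]card_ord -cardsT; congr (#|_|);
  by try (apply/setP => j; rewrite !inE).
- move=> a [[|[|//]] Hi]; rewrite /f /=; first by rewrite esum.
  by rewrite sumrN esum oppr0.
- move=> a j; rewrite big_ord_recr big_ord_recr big_ord0 /= /f /=.
  by rewrite add0r addrN.
Qed.

End F1.
Import F1.

Module F2.
Import GRing.Theory Num.Theory.
Local Open Scope ring_scope.

Lemma Z0 (N : nat) (z : int) : (1 < N)%N -> ((z%:~R : 'Z_N) == 0) = (N %| `|z|)%N.
Proof.
move=> N1.
have H : forall m : nat, ((m%:R : 'Z_N) == 0) = (N %| m)%N.
  move=> m; rewrite Zp_nat /dvdn; apply/eqP/eqP.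
    by move/(congr1 val) => /=; rewrite Zp_cast.
  by move=> H; apply: val_inj => /=; rewrite Zp_cast.
case: z => m.
  by rewrite -pmulrn H.
by rewrite NegzE mulrNz oppr_eq0 -pmulrn H.
Qed.

Lemma small_dvd (N : nat) (z : int) : (N %| `|z|)%N -> (`|z| < N)%N -> z = 0.
Proof.
move=> /dvdnP [k Hk] Hlt; case: k Hk => [|k] Hk.
  by apply/eqP; rewrite -absz_eq0 Hk.
by exfalso; move: Hlt; rewrite Hk; lia.
Qed.

Lemma intframework (n c : nat) (n0 : (0 < n)%N) (c0 : (0 < c)%N) (T : nat -> nat -> int) :
  (forall a j : nat, (a < c)%N -> (j < n)%N -> (0 < `|T a j| <= n * c)%N) ->
  (forall a j a' j' : nat, (a < c)%N -> (j < n)%N -> (a' < c)%N -> (j' < n)%N ->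
      `|T a j|%N = `|T a' j'|%N -> a = a' /\ j = j') ->
  (forall a : nat, (a < c)%N -> ((2*n*c+1)%N %| `|(\sum_(j < n) T a j)%R|)%N) ->
  MS0_exists [set x : 'Z_(2*n*c+1) | x != 0] 2 n n 2 c.
Proof.
move=> Tb Ti Ts.
have N1 : (1 < 2*n*c+1)%N by rewrite addn1 ltnS !muln_gt0 n0 c0.
apply: (@framework n c n0 c0 (fun a j => (T a j)%:~R)).
- move=> a j; rewrite Z0 //; apply/negP => Hd.
  have Hb := Tb a j (ltn_ord a) (ltn_ord j).
  have Hz : T a j = 0 by apply: (small_dvd _ _ Hd); lia.
  by move: Hb; rewrite Hz.
- move=> a j a' j' /eqP; rewrite -subr_eq0 -intrB Z0 // => /(small_dvd _ _) H.
  have := Tb a j (ltn_ord a) (ltn_ord j); have := Tb a' j' (ltn_ord a') (ltn_ord j').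
  move=> H1 H2.
  have E : T a j = T a' j' by apply/eqP; rewrite -subr_eq0; apply/eqP; apply: H; lia.
  have [E1 E2] := Ti a j a' j' (ltn_ord a) (ltn_ord j) (ltn_ord a') (ltn_ord j') (congr1 absz E).
  by split; apply: val_inj.
- move=> a j a' j'; apply/negP => /eqP; move/eqP; rewrite -subr_eq0 opprK -intrD Z0 // => /(small_dvd _ _) H.
  have := Tb a j (ltn_ord a) (ltn_ord j); have := Tb a' j' (ltn_ord a') (ltn_ord j').
  move=> H1 H2.
  have E : T a j + T a' j' = 0 by apply: H; lia.
  have E' : `|T a j|%N = `|T a' j'|%N by lia.
  have [E1 E2] := Ti a j a' j' (ltn_ord a) (ltn_ord j) (ltn_ord a') (ltn_ord j') E'.
  have Ea : a = a' by apply: val_inj.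
  have Ej : j = j' by apply: val_inj.
  subst a' j'; lia.
- move=> a; apply/eqP; rewrite -(big_morph (fun z : int => (z%:~R : 'Z_(2*n*c+1))) (@intrD _) (mulr0z 1)).
  by rewrite Z0 // Ts.
Qed.

Definition sgT (neg : bool) (m : nat) : int := if neg then - (m%:Z) else m%:Z.

Lemma abs_sgT neg m : `|sgT neg m|%N = m.
Proof. by rewrite /sgT; case: neg; rewrite ?abszN absz_nat. Qed.

Lemma natframework (n c : nat) (n0 : (0 < n)%N) (c0 : (0 < c)%N)
    (mag : nat -> nat -> nat) (neg : nat -> nat -> bool) :
  (forall a j : nat, (a < c)%N -> (j < n)%N -> (0 < mag a j <= n * c)%N) ->
  (forall a j a' j' : nat, (a < c)%N -> (j < n)%N -> (a' < c)%N -> (j' < n)%N ->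
      mag a j = mag a' j' -> a = a' /\ j = j') ->
  (forall a : nat, (a < c)%N -> ((2*n*c+1)%N %| `|(\sum_(j < n) sgT (neg a j) (mag a j))%R|)%N) ->
  MS0_exists [set x : 'Z_(2*n*c+1) | x != 0] 2 n n 2 c.
Proof.
move=> Hb Hi Hs; apply: (@intframework n c n0 c0 (fun a j => sgT (neg a j) (mag a j))) => //.
- by move=> a j Ha Hj; rewrite abs_sgT; apply: Hb.
- by move=> a j a' j' Ha Hj Ha' Hj'; rewrite !abs_sgT; apply: Hi.
Qed.

End F2.
Import F2.

Module F3.
Import GRing.Theory Num.Theory.
Local Open Scope ring_scope.

Lemma nonex (G : finZmodType) (n c : nat) : (0 < c)%N -> (n = 1 \/ n = 2)%N ->
  ~ MS0_exists [set x : G | x != 0] 2 n n 2 c.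
Proof.
move=> c0 Hn [A [Hin [Hu [Hr [Hc [Hrs Hcs]]]]]].
pose a := Ordinal c0.
have full : forall i j, A a i j != None.
  move=> i j.
  have H : [set j | A a i j != None] = setT.
    apply/eqP; rewrite eqEcard subsetT cardsT card_ord Hr.
    by case: Hn => ->.
  by move: (in_setT j); rewrite -H inE.
case: Hn => ?; subst n.
- pose i0 := @Ordinal 2 0 isT; pose j0 := @Ordinal 1 0 isT.
  case E: (A a i0 j0) (full i0 j0) => [x|] // _.
  have := Hin _ _ _ _ E; rewrite inE.
  have := Hrs a i0; rewrite big_ord_recr big_ord0 /= add0r.
  have -> : (ord_max : 'I_1) = j0 by apply: val_inj.
  by rewrite E /= => ->; rewrite eqxx.
- pose i0 := @Ordinal 2 0 isT; pose i1 := @Ordinal 2 1 isT.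
  case E00: (A a i0 i0) (full i0 i0) => [w|] // _.
  case E01: (A a i0 i1) (full i0 i1) => [x|] // _.
  case E10: (A a i1 i0) (full i1 i0) => [y|] // _.
  have R := Hrs a i0; rewrite big_ord_recr big_ord_recr big_ord0 /= add0r in R.
  have C := Hcs a i0; rewrite big_ord_recr big_ord_recr big_ord0 /= add0r in C.
  have e0 : (ord0 : 'I_2) = i0 by apply: val_inj.
  have e1 : (ord_max : 'I_2) = i1 by apply: val_inj.
  have e1' : (widen_ord (leqnSn 1) (ord_max : 'I_1)) = i0 by apply: val_inj.
  rewrite ?e0 ?e1 ?e1' E00 E01 /= in R.
  rewrite ?e0 ?e1 ?e1' E00 E10 /= in C.
  have xy : x = y by apply: (addrI w); rewrite R C.
  have := Hu x (Hin _ _ _ _ E01).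
  set S := [set t | _].
  have Hs : [set (a, i0, i1); (a, i1, i0)] \subset S.
    apply/subsetP => t; rewrite !inE => /orP [] /eqP -> /=; first by rewrite E01.
    by rewrite E10 xy.
  move/subset_leq_card: Hs; rewrite cards2 => Hle Hs1.
  by move: Hle; rewrite Hs1.
Qed.

End F3.
Import F3.

Module F4.
Import GRing.Theory Num.Theory.
Local Open Scope ring_scope.

Definition Skolem (c : nat) (pr : nat -> nat * nat) : Prop :=
 (forall a, (a < c)%N -> (0 < (pr a).1 < (pr a).2)%N /\ ((pr a).2 <= (pr a).1 + c)%N /\ ((pr a).2 <= 2*c+1)%N) /\
 (forall a a', (a < c)%N -> (a' < c)%N -> ((pr a).2 - (pr a).1 = (pr a').2 - (pr a').1)%N -> a = a') /\
 (forall a a', (a < c)%N -> (a' < c)%N -> (pr a).1 <> (pr a').2) /\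
 (forall a a', (a < c)%N -> (a' < c)%N -> (pr a).1 = (pr a').1 -> a = a') /\
 (forall a a', (a < c)%N -> (a' < c)%N -> (pr a).2 = (pr a').2 -> a = a') /\
 (forall a a', (a < c)%N -> (a' < c)%N -> (pr a).2 = (2*c+1)%N -> (pr a').1 <> (2*c)%N /\ (pr a').2 <> (2*c)%N).

Definition magS (c : nat) (pr : nat -> nat * nat) (a j : nat) : nat :=
  let x := (pr a).1 in let y := (pr a).2 in
  if j == 0%N then (y - x)%N else if j == 1%N then (c + x)%N
  else if y == (2*c+1)%N then (3*c)%N else (c + y)%N.
Definition negS (c : nat) (pr : nat -> nat * nat) (a j : nat) : bool :=
  (j == 2%N) && ((pr a).2 != (2*c+1)%N).

Lemma skolem_MS (c : nat) (pr : nat -> nat * nat) : (0 < c)%N -> Skolem c pr ->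
  MS0_exists [set x : 'Z_(2*3*c+1) | x != 0] 2 3 3 2 c.
Proof.
move=> c0 [K1 [K2 [K3 [K4 [K5 K6]]]]].
apply: (@natframework 3 c isT c0 (magS c pr) (negS c pr)).
- move=> a j Ha Hj; have := K1 a Ha; rewrite /magS.
  case: (pr a) => x y /=.
  by case: j Hj => [|[|[|//]]] _ /=; repeat case: ifP; move=> *; lia.
- move=> a j a' j' Ha Hj Ha' Hj'; have := K1 a Ha; have := K1 a' Ha'.
  have := K2 a a' Ha Ha'; have := K3 a a' Ha Ha'; have := K3 a' a Ha' Ha.
  have := K4 a a' Ha Ha'; have := K5 a a' Ha Ha'; have := K6 a a' Ha Ha'; have := K6 a' a Ha' Ha.
  rewrite /magS.
  case: (pr a) => x y; case: (pr a') => x' y' /= H6' H6 H5 H4 H3' H3 H2 H1' H1.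
  case: j Hj => [|[|[|//]]] _; case: j' Hj' => [|[|[|//]]] _ /=.
  + by move=> E; split=> //; apply: H2; lia.
  + lia.
  + case: eqP => _ /=; lia.
  + lia.
  + by move=> E; split=> //; apply: H4; lia.
  + case: eqP => [Ey'|Ny'] /= E.
      by have [] := H6' Ey'; lia.
    by exfalso; apply: (H3); lia.
  + case: eqP => _ /=; lia.
  + case: eqP => [Ey|Ny] /= E.
      by have [] := H6 Ey; lia.
    by exfalso; apply: (H3'); lia.
  + case: eqP => [Ey|Ny]; case: eqP => [Ey'|Ny'] /= E.
    * by split=> //; apply: H5; lia.
    * by have [] := H6 Ey; lia.
    * by have [] := H6' Ey'; lia.
    * by split=> //; apply: H5; lia.
- move=> a Ha; have := K1 a Ha; rewrite !big_ord_recr big_ord0 /= /magS /negS /=.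
  case: (pr a) => x y /=; case: eqP => [-> | _] H; rewrite /sgT /= ?add0r.
    have -> : (0 + (2 * c + 1 - x) + (c + x) + 3 * c = 2*3*c+1)%N by lia.
    exact: dvdnn.
  have -> : (y - x)%:Z + (c + x)%:Z = (c + y)%:Z by rewrite -PoszD; congr Posz; lia.
  by rewrite subrr.
Qed.

End F4.
Import F4.

Module F5.
Import GRing.Theory Num.Theory.
Set Implicit Arguments. Unset Strict Implicit.

Definition colS (n j : nat) : bool := (n %% 2 == 1) && (j == n - 1).
Definition colRev (n j : nat) : bool :=
  ((n %% 4 == 2) && (j == n - 2)) || ((n %% 4 == 3) && (j == 5)).
Definition colN (n j : nat) : bool :=
  if n %% 4 == 0 then (j %% 4 == 1) || (j %% 4 == 2)
  else if n %% 4 == 2 then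
    (if n - 2 <= j then false else if j < 4 then (j == 0) || (j == 2)
     else (j %% 4 == 1) || (j %% 4 == 2))
  else if n %% 4 == 1 then (if j < 4 then j == 1 else (j %% 4 == 0) || (j %% 4 == 1))
  else (if j < 6 then (j == 2) || (j == 4) || (j == 5) else (j %% 4 == 0) || (j %% 4 == 1)).

Definition magB (n c a j : nat) : nat :=
  if colS n j then (if c - 1 <= 2*a then n*c + c - 1 - 2*a else n*c - c + 2 + 2*a)
  else if colRev n j then j*c + c - a else j*c + 1 + a.
Definition negB (n c a j : nat) : bool :=
  if colS n j then ~~ (c - 1 <= 2*a) else colN n j.

Lemma magB_band n c a j : 0 < c -> a < c -> j < n ->
  j*c + 1 <= magB n c a j <= j*c + c.
Proof.
move=> c0 Ha Hj; rewrite /magB.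
have Hn : n * c = (n - 1) * c + c by case: n Hj => [|n] //= _; rewrite subn1 /= mulSn addnC.
case: ifP => [/andP [_ /eqP ->]|_].
  move: Hn; move: (n * c) ((n - 1) * c) => M K Hn.
  by case: ifP => ?; lia.
by case: ifP => ?; lia.
Qed.

Lemma magB_inj n c a a' j : 0 < c -> a < c -> a' < c -> j < n ->
  magB n c a j = magB n c a' j -> a = a'.
Proof.
move=> c0 Ha Ha' Hj; rewrite /magB.
have Hn : n * c = (n - 1) * c + c by case: n Hj => [|n] //= _; rewrite subn1 /= mulSn addnC.
case: ifP => ?; last by case: ifP => ?; lia.
move: Hn; move: (n * c) ((n - 1) * c) => M K Hn.
by case: ifP => ?; case: ifP => ?; lia.
Qed.

Lemma magB_inj2 n c a a' j j' : 0 < c -> a < c -> a' < c -> j < n -> j' < n ->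
  magB n c a j = magB n c a' j' -> a = a' /\ j = j'.
Proof.
move=> c0 Ha Ha' Hj Hj' E.
have B := @magB_band n c a j c0 Ha Hj; have B' := @magB_band n c a' j' c0 Ha' Hj'.
have Ejj : j = j'.
  case: (ltngtP j j') => // Hlt.
  - have : j.+1 * c <= j' * c by rewrite leq_mul2r Hlt orbT.
    lia.
  - have : j'.+1 * c <= j * c by rewrite leq_mul2r Hlt orbT.
    lia.
subst j'; split=> //; exact: (magB_inj c0 Ha Ha' Hj E).
Qed.


Definition vB (n c a j : nat) : int := sgT (negB n c a j) (magB n c a j).

Lemma sum4 (f : nat -> int) (k : nat) :
  (\sum_(0 <= j < k + 4) f j =
  \sum_(0 <= j < k) f j + (f k + f (k + 1)%N + f (k + 2)%N + f (k + 3)%N))%R.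
Proof.
rewrite (@big_cat_nat _ _ _ k) //=; last by rewrite leq_addr.
congr (_ + _)%R.
rewrite big_ltn; last by lia.
rewrite big_ltn; last by lia.
rewrite big_ltn; last by lia.
rewrite big_ltn; last by lia.
rewrite big_geq; last by lia.
by rewrite addr0 !addrA !addn1 !addnS !addn0.
Qed.

Lemma sumgroups (f : nat -> int) (b L : nat) (B G : int) :
  (\sum_(0 <= j < b) f j)%R = B ->
  (forall k, (b <= k)%N -> ((k - b) %% 4 = 0)%N -> (k + 4 <= L)%N ->
     (f k + f (k+1)%N + f (k+2)%N + f (k+3)%N)%R = G) ->
  forall m, (b + 4 * m <= L)%N -> (\sum_(0 <= j < b + 4 * m) f j)%R = (B + G *+ m)%R.
Proof.
move=> HB HG; elim=> [|m IH] Hm; first by rewrite muln0 addn0 HB mulr0n addr0.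
have -> : (b + 4 * m.+1 = (b + 4 * m) + 4)%N by lia.
rewrite sum4 IH; last lia.
rewrite HG; [|lia|lia|lia].
by rewrite mulrSr addrA.
Qed.

Lemma vB_plain n c a j : colS n j = false -> colRev n j = false ->
  vB n c a j = sgT (colN n j) (j*c + 1 + a).
Proof. by rewrite /vB /negB /magB => -> ->. Qed.

Lemma sgT_P m : sgT false m = Posz m. Proof. by []. Qed.
Lemma sgT_N m : sgT true m = (- Posz m)%R. Proof. by []. Qed.

Lemma sumB0 n c a : (n %% 4 = 0)%N -> (\sum_(0 <= j < n) vB n c a j)%R = 0.
Proof.
move=> Hn.
have En : n = (0 + 4 * (n %/ 4))%N by lia.
have cN : forall j, colN n j = (j %% 4 == 1) || (j %% 4 == 2).
  by move=> j; rewrite /colN ifT //; apply/eqP.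
rewrite {1}En (@sumgroups _ 0 n 0 0) //; first by rewrite mul0rn addr0.
- by rewrite big_geq.
- move=> k _ Hk Hk4.
  rewrite !vB_plain ?cN; try (rewrite /colS /colRev; lia).
  have -> : (k %% 4 = 0)%N by lia.
  have -> : ((k + 1) %% 4 = 1)%N by lia.
  have -> : ((k + 2) %% 4 = 2)%N by lia.
  have -> : ((k + 3) %% 4 = 3)%N by lia.
  rewrite /=; lia.
- lia.
Qed.

Lemma vB_R n c a j : colS n j = false -> colRev n j = true ->
  vB n c a j = sgT (colN n j) (j*c + c - a).
Proof. by rewrite /vB /negB /magB => -> ->. Qed.

Lemma vB_S n c a j : colS n j = true ->
  vB n c a j = sgT (~~ (c - 1 <= 2*a)) (if c - 1 <= 2*a then n*c + c - 1 - 2*a else n*c - c + 2 + 2*a).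
Proof. by rewrite /vB /negB /magB => ->. Qed.

Lemma sumB2 n c a : (n %% 4 = 2)%N -> (6 <= n)%N -> (a < c)%N ->
  (\sum_(0 <= j < n) vB n c a j)%R = Posz (2*n*c+1).
Proof.
move=> Hn H6 Ha.
have cN : forall j, colN n j = if (n - 2 <= j)%N then false else if (j < 4)%N then (j == 0) || (j == 2)
            else (j %% 4 == 1) || (j %% 4 == 2).
  move=> j; rewrite /colN ifF; last lia.
  by rewrite ifT //; lia.
have E : n = (n - 1).+1 by lia.
rewrite {1}E big_nat_recr //=.
have E' : (n - 1 = (n - 2).+1)%N by lia.
rewrite {1}E' big_nat_recr //=.
have E2 : (n - 2 = 4 + 4 * ((n - 6) %/ 4))%N by lia.
rewrite {1}E2 (@sumgroups _ 4 (n-2) (Posz (2*c)) 0); last by lia.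
- rewrite mul0rn addr0.
  rewrite vB_R; [|rewrite /colS; lia|rewrite /colRev; lia].
  rewrite vB_plain; [|rewrite /colS; lia|rewrite /colRev; lia].
  rewrite !cN ifT; last lia.
  rewrite ifT; last lia.
  rewrite !sgT_P.
  have h1 : ((n - 1) * c = (n - 2) * c + c)%N.
    by rewrite -mulSnr; congr (_ * _)%N; lia.
  have h2 : (n * c = (n - 1) * c + c)%N.
    by rewrite -mulSnr; congr (_ * _)%N; lia.
  lia.
- rewrite (sum4 _ 0) big_geq //.
  rewrite !vB_plain; try (rewrite /colS /colRev; lia).
  rewrite !cN.
  rewrite !ifF; try lia.
  rewrite /= ?add0r; lia.
- move=> k Hk Hk4 HkL.
  rewrite !vB_plain; try (rewrite /colS /colRev; lia).
  rewrite !cN !ifF; try lia.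
  have -> : (k %% 4 = 0)%N by lia.
  have -> : ((k + 1) %% 4 = 1)%N by lia.
  have -> : ((k + 2) %% 4 = 2)%N by lia.
  have -> : ((k + 3) %% 4 = 3)%N by lia.
  rewrite /=; lia.
Qed.

Lemma sumB1 n c a : (n %% 4 = 1)%N -> (5 <= n)%N -> (a < c)%N ->
  (2*n*c+1 %| `|(\sum_(0 <= j < n) vB n c a j)%R|)%N.
Proof.
move=> Hn H5 Ha.
have cN : forall j, colN n j = if (j < 4)%N then j == 1 else (j %% 4 == 0) || (j %% 4 == 1).
  move=> j; rewrite /colN ifF; last lia.
  rewrite ifF; last lia.
  by rewrite ifT //; lia.
have E : n = (n - 1).+1 by lia.
have -> : (\sum_(0 <= j < n) vB n c a j = \sum_(0 <= j < n - 1) vB n c a j + vB n c a (n - 1))%R.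
  by rewrite {1}E big_nat_recr.
set m := ((n - 5) %/ 4)%N.
have E2 : (n - 1 = 4 + 4 * m)%N by lia.
rewrite {1}E2 (@sumgroups _ 4 (n-1) (Posz (4*c+2+2*a)) (Posz (4*c))); last by lia.
- rewrite vB_S; last by rewrite /colS; lia.
  have En : n = (5 + 4 * m)%N by lia.
  rewrite En.
  case: ifP => H /=.
    have -> : (Posz (4 * c + 2 + 2 * a) + Posz (4 * c) *+ m + Posz ((5 + 4 * m) * c + c - 1 - 2 * a))%R
              = Posz (2 * (5 + 4 * m) * c + 1) by lia.
    by rewrite absz_nat dvdnn.
  have -> : (Posz (4 * c + 2 + 2 * a) + Posz (4 * c) *+ m - Posz ((5 + 4 * m) * c - c + 2 + 2 * a))%R = 0 by lia.
  by rewrite dvdn0.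
- rewrite (sum4 _ 0) big_geq //.
  rewrite !vB_plain; try (rewrite /colS /colRev; lia).
  rewrite !cN /= ?add0r; lia.
- move=> k Hk Hk4 HkL.
  rewrite !vB_plain; try (rewrite /colS /colRev; lia).
  rewrite !cN !ifF; try lia.
  have -> : (k %% 4 = 0)%N by lia.
  have -> : ((k + 1) %% 4 = 1)%N by lia.
  have -> : ((k + 2) %% 4 = 2)%N by lia.
  have -> : ((k + 3) %% 4 = 3)%N by lia.
  rewrite /=; lia.
Qed.

Lemma sumB3 n c a : (n %% 4 = 3)%N -> (7 <= n)%N -> (a < c)%N ->
  (2*n*c+1 %| `|(\sum_(0 <= j < n) vB n c a j)%R|)%N.
Proof.
move=> Hn H7 Ha.
have cN : forall j, colN n j = if (j < 6)%N then (j == 2) || (j == 4) || (j == 5) else (j %% 4 == 0) || (j %% 4 == 1).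
  move=> j; rewrite /colN ifF; last lia.
  rewrite ifF; last lia.
  by rewrite ifF //; lia.
have E : n = (n - 1).+1 by lia.
have -> : (\sum_(0 <= j < n) vB n c a j = \sum_(0 <= j < n - 1) vB n c a j + vB n c a (n - 1))%R.
  by rewrite {1}E big_nat_recr.
set m := ((n - 7) %/ 4)%N.
have E2 : (n - 1 = 6 + 4 * m)%N by lia.
rewrite {1}E2 (@sumgroups _ 6 (n-1) (- Posz (8*c) + Posz (1+2*a))%R (- Posz (4*c))%R); last by lia.
- rewrite vB_S; last by rewrite /colS; lia.
  have En : n = (7 + 4 * m)%N by lia.
  rewrite En.
  case: ifP => H /=.
    have -> : (- Posz (8 * c) + Posz (1 + 2 * a) + (- Posz (4 * c)) *+ m + Posz ((7 + 4 * m) * c + c - 1 - 2 * a))%R = 0 by lia.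
    by rewrite dvdn0.
  have -> : (- Posz (8 * c) + Posz (1 + 2 * a) + (- Posz (4 * c)) *+ m - Posz ((7 + 4 * m) * c - c + 2 + 2 * a))%R
      = (- Posz (2 * (7 + 4 * m) * c + 1))%R by lia.
  by rewrite abszN absz_nat dvdnn.
- have -> : 6%N = (4 + 1).+1 by [].
  rewrite big_nat_recr //= big_nat_recr //= (sum4 _ 0) big_geq //.
  rewrite (@vB_R n c a 5); [|rewrite /colS; lia| rewrite /colRev; lia].
  rewrite !vB_plain; try (rewrite /colS /colRev; lia).
  rewrite !cN /= ?add0r; lia.
- move=> k Hk Hk4 HkL.
  rewrite !vB_plain; try (rewrite /colS /colRev; lia).
  rewrite !cN !ifF; try lia.
  have -> : (k %% 4 = 2)%N by lia.
  have -> : ((k + 1) %% 4 = 3)%N by lia.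
  have -> : ((k + 2) %% 4 = 0)%N by lia.
  have -> : ((k + 3) %% 4 = 1)%N by lia.
  rewrite /=; lia.
Qed.

Lemma band_MS n c : (4 <= n)%N -> (0 < c)%N ->
  MS0_exists [set x : 'Z_(2*n*c+1) | x != 0%R] 2 n n 2 c.
Proof.
move=> Hn c0.
have n0 : (0 < n)%N by lia.
apply: (@natframework n c n0 c0 (magB n c) (negB n c)).
- move=> a j Ha Hj; have := @magB_band n c a j c0 Ha Hj.
  have : (j.+1 * c <= n * c)%N by rewrite leq_mul2r Hj orbT.
  lia.
- move=> a j a' j' Ha Hj Ha' Hj'; exact: magB_inj2.
- move=> a Ha.
  rewrite -(big_mkord xpredT (fun j => sgT (negB n c a j) (magB n c a j))).
  change (2 * n * c + 1 %| `|(\sum_(0 <= j < n) vB n c a j)%R|)%N.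
  have : (n %% 4 < 4)%N by rewrite ltn_mod.
  case E: (n %% 4)%N => [|[|[|[|//]]]] _.
  + by rewrite sumB0 // dvdn0.
  + by apply: sumB1 => //; lia.
  + rewrite sumB2 ?absz_nat ?dvdnn //; lia.
  + by apply: sumB3 => //; lia.
Qed.

End F5.
Import F5.

Module F6.

Definition pr0 (s a : nat) : nat * nat :=
  if a < 2*s then (4*s + a, 8*s - a)
  else if a < 3*s - 2 then (a - 2*s + 1, 6*s - 2 - a)
  else if a < 4*s - 4 then (a - 2*s + 4, 6*s - 3 - a)
  else if a == 4*s - 4 then (s, s+1)
  else if a == 4*s - 3 then (s - 1, 3*s)
  else if a == 4*s - 2 then (2*s+1, 6*s)
  else (2*s, 4*s - 1).

Ltac solve_pr := repeat (case: ifP => /= ?); lia.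

Lemma sk0 s : 2 <= s -> Skolem (4*s) (pr0 s).
Proof.
move=> Hs; rewrite /Skolem /pr0; split; [|split; [|split; [|split; [|split]]]].
- by move=> a Ha; solve_pr.
- by move=> a a' Ha Ha'; solve_pr.
- by move=> a a' Ha Ha'; solve_pr.
- by move=> a a' Ha Ha'; solve_pr.
- by move=> a a' Ha Ha'; solve_pr.
- by move=> a a' Ha Ha'; solve_pr.
Qed.

Definition pr1 (s a : nat) : nat * nat :=
  if a < 2*s then (4*s + 2 + a, 8*s + 2 - a)
  else if a == 2*s then (2*s + 1, 6*s + 2)
  else if a < 3*s + 1 then (a - 2*s, 6*s + 1 - a)
  else if a == 3*s + 1 then (s + 1, s + 2)
  else if a == 3*s + 2 then (2*s + 2, 4*s + 1)
  else (a - 2*s, 6*s + 3 - a).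

Lemma sk1 s : 2 <= s -> Skolem (4*s+1) (pr1 s).
Proof.
move=> Hs; rewrite /Skolem /pr1; split; [|split; [|split; [|split; [|split]]]].
- by move=> a Ha; solve_pr.
- by move=> a a' Ha Ha'; solve_pr.
- by move=> a a' Ha Ha'; solve_pr.
- by move=> a a' Ha Ha'; solve_pr.
- by move=> a a' Ha Ha'; solve_pr.
- by move=> a a' Ha Ha'; solve_pr.
Qed.

Definition pr2 (s a : nat) : nat * nat :=
  if a < 2*s then (a + 1, 4*s + 1 - a)
  else if a == 2*s then (2*s + 1, 6*s + 3)
  else if a < 3*s + 1 then (2*s + 1 + a, 10*s + 4 - a)
  else if a == 3*s + 1 then (6*s + 4, 8*s + 5)
  else if a == 3*s + 2 then (5*s + 2, 5*s + 3)
  else (2*s + 1 + a, 10*s + 6 - a).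

Lemma sk2 s : 1 <= s -> Skolem (4*s+2) (pr2 s).
Proof.
move=> Hs; rewrite /Skolem /pr2; split; [|split; [|split; [|split; [|split]]]].
- by move=> a Ha; solve_pr.
- by move=> a a' Ha Ha'; solve_pr.
- by move=> a a' Ha Ha'; solve_pr.
- by move=> a a' Ha Ha'; solve_pr.
- by move=> a a' Ha Ha'; solve_pr.
- by move=> a a' Ha Ha'; solve_pr.
Qed.

Definition pr3 (s a : nat) : nat * nat :=
  if a < 2*s + 1 then (a + 1, 4*s + 3 - a)
  else if a == 2*s + 1 then (2*s + 2, 6*s + 5)
  else if a < 3*s + 2 then (2*s + 2 + a, 10*s + 7 - a)
  else if a == 3*s + 2 then (6*s + 6, 8*s + 7)
  else if a == 3*s + 3 then (5*s + 4, 5*s + 5)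
  else (2*s + 2 + a, 10*s + 9 - a).

Lemma sk3 s : 1 <= s -> Skolem (4*s+3) (pr3 s).
Proof.
move=> Hs; rewrite /Skolem /pr3; split; [|split; [|split; [|split; [|split]]]].
- by move=> a Ha; solve_pr.
- by move=> a a' Ha Ha'; solve_pr.
- by move=> a a' Ha Ha'; solve_pr.
- by move=> a a' Ha Ha'; solve_pr.
- by move=> a a' Ha Ha'; solve_pr.
- by move=> a a' Ha Ha'; solve_pr.
Qed.

End F6.
Import F6.

Module F7.

Definition skolemb (c : nat) (pr : nat -> nat * nat) : bool :=
  all (fun a => [&& 0 < (pr a).1, (pr a).1 < (pr a).2, (pr a).2 <= (pr a).1 + c & (pr a).2 <= 2*c+1]) (iota 0 c) &&
  all (fun a => all (fun a' => [&& ((pr a).2 - (pr a).1 == (pr a').2 - (pr a').1) ==> (a == a'),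
      (pr a).1 != (pr a').2, ((pr a).1 == (pr a').1) ==> (a == a'), ((pr a).2 == (pr a').2) ==> (a == a')
      & ((pr a).2 == 2*c+1) ==> (((pr a').1 != 2*c) && ((pr a').2 != 2*c))]) (iota 0 c)) (iota 0 c).

Lemma skolembP c pr : skolemb c pr -> Skolem c pr.
Proof.
move=> /andP [/allP H1 /allP H2].
have H2' : forall a a', a < c -> a' < c -> [&& ((pr a).2 - (pr a).1 == (pr a').2 - (pr a').1) ==> (a == a'),
      (pr a).1 != (pr a').2, ((pr a).1 == (pr a').1) ==> (a == a'), ((pr a).2 == (pr a').2) ==> (a == a')
      & ((pr a).2 == 2*c+1) ==> (((pr a').1 != 2*c) && ((pr a').2 != 2*c))].
  move=> a a' Ha Ha'; have := H2 a; rewrite mem_iota add0n => /(_ Ha) /allP /(_ a').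
  by rewrite mem_iota add0n; apply.
split; [|split; [|split; [|split; [|split]]]].
- move=> a Ha; have := H1 a; rewrite mem_iota add0n => /(_ Ha) /and4P [h1 h2 h3 h4].
  by rewrite h1 h2 h3 h4.
- move=> a a' Ha Ha' E; have /and5P [h _ _ _ _] := H2' a a' Ha Ha'.
  by apply/eqP; move/implyP: h; apply; apply/eqP.
- move=> a a' Ha Ha' E; have /and5P [_ h _ _ _] := H2' a a' Ha Ha'.
  by move: h; rewrite E eqxx.
- move=> a a' Ha Ha' E; have /and5P [_ _ h _ _] := H2' a a' Ha Ha'.
  by apply/eqP; move/implyP: h; apply; apply/eqP.
- move=> a a' Ha Ha' E; have /and5P [_ _ _ h _] := H2' a a' Ha Ha'.
  by apply/eqP; move/implyP: h; apply; apply/eqP.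
- move=> a a' Ha Ha' E; have /and5P [_ _ _ _ h] := H2' a a' Ha Ha'.
  move/implyP: h => /(_ (introT eqP E)) /andP [/eqP h1 /eqP h2]; by split.
Qed.

Definition prsmall (c a : nat) : nat * nat :=
  nth (0, 0) (match c with
              | 1 => [:: (1, 2)]
              | 2 => [:: (1, 2); (3, 5)]
              | 3 => [:: (2, 3); (1, 4); (5, 7)]
              | 4 => [:: (1, 2); (5, 7); (3, 6); (4, 8)]
              | _ => [:: (9, 10); (2, 4); (5, 8); (3, 7); (1, 6)]
              end) a.

Lemma skolem_exists c : 0 < c -> exists pr, Skolem c pr.
Proof.
move=> c0.
case: (leqP c 5) => Hc.
  exists (prsmall c); apply: skolembP.
  by case: c c0 Hc => [|[|[|[|[|[|]]]]]].
have Ec : c = 4 * (c %/ 4) + c %% 4 by lia.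
have : c %% 4 < 4 by rewrite ltn_mod.
case E: (c %% 4) => [|[|[|[|//]]]] _; rewrite E in Ec; rewrite Ec.
- by exists (pr0 (c %/ 4)); rewrite addn0; apply: sk0; lia.
- by exists (pr1 (c %/ 4)); apply: sk1; lia.
- by exists (pr2 (c %/ 4)); apply: sk2; lia.
- by exists (pr3 (c %/ 4)); apply: sk3; lia.
Qed.

End F7.
Import F7.

Local Open Scope ring_scope.

Theorem mainTheorem14 (n c : nat) :
  (1 <= n)%N -> (1 <= c)%N ->
  (MS0_exists [set x : 'Z_(2 * n * c + 1) | x != 0] 2 n n 2 c <-> (3 <= n)%N).
Proof.
move=> n1 c1; split.
- move=> H; case: (leqP 3 n) => // Hn; exfalso.
  apply: (@nonex _ n c c1 _ H); lia.
- move=> Hn; case: (leqP 4 n) => H4.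
    exact: band_MS.
  have -> : n = 3%N by lia.
  have [pr Hpr] := @skolem_exists c c1.
  exact: (@skolem_MS c pr c1 Hpr).
Qed.
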